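(* Let $X$ be a graph, $F$ a graph, and $\phi$ an $\mathrm{Aut}(F)$-voltage assignment on $X$. Let $\Gamma$ act on $X$ and $\Delta$ act on $F$ by graph automorphisms without inversions, such that the pair $(\Gamma, \Delta)$ is $\phi$-compatible. Then the product action $$(\gamma, \delta)(x, i) = (\gamma x, \delta i), \qquad (\gamma,\delta) \in \Gamma \times \Delta, \ (x,i) \in V(X \times^{\phi} F),$$ is an action by graph automorphisms on $X \times^{\phi} F$. Furthermore, if the actions of $\Gamma$ on $X$ and of $\Delta$ on $F$ are of finite co-volume, so is the action of $\Gamma \times \Delta$ on $X \times^{\phi} F$.
   Context: For a graph $G$, $E(\overrightarrow{G})$ is the set of ordered edges (each edge with both orientations); an $\mathrm{Aut}(F)$-voltage assignment on $G$ is a map $\phi: E(\overrightarrow{G}) \to \mathrm{Aut}(F)$ with $\phi(uv) = \phi(vu)^{-1}$. The graph bundle $X \times^{\phi} F$ has vertex set $V(X)\times V(F)$, with $(u,i) \sim (v,j)$ iff either $u \sim v$ and $j = i^{\phi(uv)}$ (the image of $i$ under $\phi(uv)$), or $u = v$ and $i \sim j$ in $F$. The action of $\Gamma$ on $X$ is $(F,\phi)$-compatible if $\phi(\gamma(u)\gamma(v)) = \phi(uv)$ for all edges $uv$ and all $\gamma \in \Gamma$. The action of $\Delta$ on $F$ (regarded as a subgroup of $\mathrm{Aut}(F)$) is $(X,\phi)$-compatible if the image of $\phi$ is contained in the centralizer $C_{\mathrm{Aut}(F)}(\Delta)$. The pair $(\Gamma,\Delta)$ is $\phi$-compatible if both hold.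 An action of a group $G$ on a graph is of finite co-volume if every vertex stabilizer $G_v$ is finite and $\sum_{v \in \mathcal{F}_0} 1/|G_v| < \infty$, where $\mathcal{F}_0$ is a set of representatives of the vertex orbits. *)

(* Defs.v *)
From Stdlib Require Import Reals List.
Open Scope R_scope.

Definition simple_graph {V : Type} (adj : V -> V -> Prop) : Prop :=
  (forall x y, adj x y -> adj y x) /\ (forall x, ~ adj x x).

Definition is_group {G : Type} (mul : G -> G -> G) (e : G) (inv : G -> G) : Prop :=
  (forall a b c, mul a (mul b c) = mul (mul a b) c) /\
  (forall a, mul e a = a) /\ (forall a, mul a e = a) /\
  (forall a, mul (inv a) a = e) /\ (forall a, mul a (inv a) = e).

Definition is_graph_aut {V : Type} (adj : V -> V -> Prop) (f : V -> V) : Prop :=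
  (exists g : V -> V, (forall x, g (f x) = x) /\ (forall x, f (g x) = x)) /\
  (forall x y, adj x y <-> adj (f x) (f y)).

Definition action_by_auts {G V : Type} (adj : V -> V -> Prop)
  (mul : G -> G -> G) (e : G) (act : G -> V -> V) : Prop :=
  (forall x, act e x = x) /\
  (forall g h x, act (mul g h) x = act g (act h x)) /\
  (forall g, is_graph_aut adj (act g)).

Definition without_inversions {G V : Type} (adj : V -> V -> Prop)
  (act : G -> V -> V) : Prop :=
  forall g u v, adj u v -> ~ (act g u = v /\ act g v = u).

(* Aut(F)-voltage assignment: phi u v is the element of Aut(F) attached to the
   ordered edge uv (its values on non-edges are irrelevant), and
   phi v u = (phi u v)^-1.  The image of i under phi(uv) is  phi u v i. *)
Definition voltage_assignment {VX VF : Type} (adjX : VX -> VX -> Prop)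
  (adjF : VF -> VF -> Prop) (phi : VX -> VX -> VF -> VF) : Prop :=
  forall u v, adjX u v ->
    is_graph_aut adjF (phi u v) /\
    (forall i, phi v u (phi u v i) = i) /\ (forall i, phi u v (phi v u i) = i).

Definition bundle_adj {VX VF : Type} (adjX : VX -> VX -> Prop)
  (adjF : VF -> VF -> Prop) (phi : VX -> VX -> VF -> VF)
  (p q : VX * VF) : Prop :=
  (adjX (fst p) (fst q) /\ snd q = phi (fst p) (fst q) (snd p)) \/
  (fst p = fst q /\ adjF (snd p) (snd q)).

Definition F_phi_compatible {G VX VF : Type} (adjX : VX -> VX -> Prop)
  (phi : VX -> VX -> VF -> VF) (act : G -> VX -> VX) : Prop :=
  forall g u v, adjX u v -> forall i, phi (act g u) (act g v) i = phi u v i.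

Definition X_phi_compatible {D VX VF : Type} (adjX : VX -> VX -> Prop)
  (phi : VX -> VX -> VF -> VF) (act : D -> VF -> VF) : Prop :=
  forall u v, adjX u v -> forall d i, phi u v (act d i) = act d (phi u v i).

Definition stab_card {G V : Type} (act : G -> V -> V) (v : V) (n : nat) : Prop :=
  exists l : list G, NoDup l /\ (forall g, In g l <-> act g v = v) /\ length l = n.

Definition orbit_reps {G V : Type} (act : G -> V -> V) (reps : V -> Prop) : Prop :=
  (forall x, exists r g, reps r /\ act g r = x) /\
  (forall r1 r2 g, reps r1 -> reps r2 -> act g r1 = r2 -> r1 = r2).

Fixpoint inv_card_sum {V : Type} (l : list (V * nat)) : R :=
  match l with
  | nil => 0
  | p :: l' => / INR (snd p) + inv_card_sum l'
  end.

(* Finite co-volume: all vertex stabilizers are finite and, for a set F0 of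
   orbit representatives, the (nonnegative) sum over F0 of 1/|G_v| converges,
   i.e. all its finite partial sums are bounded. *)
Definition finite_covolume {G V : Type} (act : G -> V -> V) : Prop :=
  (forall v, exists n, stab_card act v n) /\
  exists reps : V -> Prop, orbit_reps act reps /\
  exists M : R, forall l : list (V * nat),
    NoDup (map fst l) ->
    (forall p, In p l -> reps (fst p) /\ stab_card act (fst p) (snd p)) ->
    inv_card_sum l <= M.

Definition prod_mul {G D : Type} (mulG : G -> G -> G) (mulD : D -> D -> D)
  (a b : G * D) : G * D := (mulG (fst a) (fst b), mulD (snd a) (snd b)).

Definition prod_act {G D VX VF : Type} (actG : G -> VX -> VX)
  (actD : D -> VF -> VF) (gd : G * D) (p : VX * VF) : VX * VF :=
  (actG (fst gd) (fst p), actD (snd gd) (snd p)).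

(* Main.v *)
Require Import Defs.
From Stdlib Require Import Reals List ClassicalEpsilon Lra.

Definition sumf {A : Type} (f : A -> R) (l : list A) : R :=
  fold_right (fun x acc => (f x + acc)%R) 0%R l.

Lemma sumf_app {A} (f : A -> R) l1 l2 : sumf f (l1 ++ l2) = (sumf f l1 + sumf f l2)%R.
Proof. induction l1; simpl; [lra|]. unfold sumf in *; simpl; rewrite IHl1; lra. Qed.

Lemma sumf_nonneg {A} (f : A -> R) l : (forall x, 0 <= f x)%R -> (0 <= sumf f l)%R.
Proof. intros H; induction l; simpl; [lra|]. unfold sumf in *; simpl; specialize (H a); lra. Qed.

Lemma sumf_ext {A} (f g : A -> R) l : (forall x, f x = g x) -> sumf f l = sumf g l.
Proof. intros H; induction l; simpl; auto. unfold sumf in *; simpl; rewrite IHl, H; auto. Qed.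

Lemma sumf_map {A B} (f : B -> R) (k : A -> B) l : sumf f (map k l) = sumf (fun x => f (k x)) l.
Proof. induction l; simpl; auto. unfold sumf in *; simpl; rewrite IHl; auto. Qed.

Lemma sumf_scal {A} (f : A -> R) c l : sumf (fun x => c * f x)%R l = (c * sumf f l)%R.
Proof. induction l; simpl; unfold sumf in *; simpl; [lra|]. rewrite IHl; lra. Qed.

Lemma sumf_incl {A} (f : A -> R) : (forall x, 0 <= f x)%R ->
  forall l' l, NoDup l -> incl l l' -> (sumf f l <= sumf f l')%R.
Proof.
  intros Hf l'. induction l' as [|a l' IH]; intros l Hnd Hi.
  - destruct l as [|b l]; [simpl; lra|]. exfalso; apply (Hi b); left; auto.
  - destruct (classic (In a l)) as [Ha|Ha].
    + destruct (in_split _ _ Ha) as [l1 [l2 ->]].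
      rewrite sumf_app. change (sumf f (a :: l2)) with (f a + sumf f l2)%R.
      assert (H := IH (l1 ++ l2) (NoDup_remove_1 _ _ _ Hnd)).
      rewrite sumf_app in H.
      change (sumf f (a :: l')) with (f a + sumf f l')%R.
      enough (sumf f l1 + sumf f l2 <= sumf f l')%R by lra.
      apply H. intros y Hy.
      assert (Hy' : In y (l1 ++ a :: l2)).
      { apply in_app_or in Hy; apply in_or_app; destruct Hy; [left|right; right]; auto. }
      destruct (Hi y Hy') as [->|]; auto.
      exfalso; exact (NoDup_remove_2 _ _ _ Hnd Hy).
    + change (sumf f (a :: l')) with (f a + sumf f l')%R.
      assert (sumf f l <= sumf f l')%R.
      { apply IH; auto. intros y Hy. destruct (Hi y Hy) as [->|]; auto. contradiction. }
      specialize (Hf a); lra.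
Qed.

Lemma NoDup_prod {A B} (la : list A) (lb : list B) :
  NoDup la -> NoDup lb -> NoDup (list_prod la lb).
Proof.
  intros Ha Hb; induction Ha as [|x t Hx Ht IH]; simpl; [constructor|].
  apply NoDup_app; auto.
  - apply NoDup_map_NoDup_ForallPairs; auto. intros y z _ _ H; injection H; auto.
  - intros p Hp Hp'. apply in_map_iff in Hp. destruct Hp as [y [<- _]].
    apply in_prod_iff in Hp'. tauto.
Qed.

Lemma sumf_prod {A B} (f : A -> R) (g : B -> R) la lb :
  sumf (fun p => f (fst p) * g (snd p))%R (list_prod la lb) = (sumf f la * sumf g lb)%R.
Proof.
  induction la as [|x t IH]; simpl; [unfold sumf; simpl; lra|].
  rewrite sumf_app, IH, sumf_map. simpl. rewrite sumf_scal.
  change (sumf f (x :: t)) with (f x + sumf f t)%R. lra.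
Qed.

Lemma inv_card_sumf {V} (l : list (V * nat)) : inv_card_sum l = sumf (fun p => / INR (snd p))%R l.
Proof. induction l; simpl; auto. rewrite IHl; auto. Qed.

Lemma inv_INR_nonneg n : (0 <= / INR n)%R.
Proof.
  destruct n. simpl. rewrite Rinv_0; lra.
  apply Rlt_le, Rinv_0_lt_compat, lt_0_INR; auto with arith.
Qed.

Lemma stab_card_unique {G V} (act : G -> V -> V) v n m :
  stab_card act v n -> stab_card act v m -> n = m.
Proof.
  intros [l1 [N1 [M1 L1]]] [l2 [N2 [M2 L2]]]. subst.
  apply Nat.le_antisymm; apply NoDup_incl_length; auto; intros g Hg.
  apply M2, M1, Hg. apply M1, M2, Hg.
Qed.

Lemma stab_prod {G D VX VF} (actG : G -> VX -> VX) (actD : D -> VF -> VF) x i n m :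
  stab_card actG x n -> stab_card actD i m ->
  stab_card (prod_act actG actD) (x, i) (n * m).
Proof.
  intros [lx [N1 [M1 L1]]] [li [N2 [M2 L2]]].
  exists (list_prod lx li). split; [apply NoDup_prod; auto|]. split.
  - intros [g d]. rewrite in_prod_iff, M1, M2. unfold prod_act; simpl. split.
    + intros [-> ->]; auto.
    + intros H; injection H; auto.
  - rewrite length_prod; subst; auto.
Qed.

Theorem lemma3p2
  (VX VF G D : Type)
  (adjX : VX -> VX -> Prop) (adjF : VF -> VF -> Prop)
  (phi : VX -> VX -> VF -> VF)
  (mulG : G -> G -> G) (eG : G) (invG : G -> G)
  (mulD : D -> D -> D) (eD : D) (invD : D -> D)
  (actG : G -> VX -> VX) (actD : D -> VF -> VF) :
  simple_graph adjX -> simple_graph adjF ->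
  voltage_assignment adjX adjF phi ->
  is_group mulG eG invG -> is_group mulD eD invD ->
  action_by_auts adjX mulG eG actG -> without_inversions adjX actG ->
  action_by_auts adjF mulD eD actD -> without_inversions adjF actD ->
  F_phi_compatible adjX phi actG ->
  X_phi_compatible adjX phi actD ->
  action_by_auts (bundle_adj adjX adjF phi) (prod_mul mulG mulD) (eG, eD)
    (prod_act actG actD) /\
  (finite_covolume actG -> finite_covolume actD ->
   finite_covolume (prod_act actG actD)).
Proof.
  intros _ _ _ _ _ [HeG [HmG HautG]] _ [HeD [HmD HautD]] _ HFc HXc.
  split; [split; [|split]|].
  - intros [x i]; unfold prod_act; simpl; rewrite HeG, HeD; auto.
  - intros [g d] [g' d'] [x i]; unfold prod_act, prod_mul; simpl; rewrite HmG, HmD; auto.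
  - intros [g d].
    destruct (HautG g) as [[gi [Hg1 Hg2]] HgA]; destruct (HautD d) as [[di [Hd1 Hd2]] HdA].
    split.
    + exists (fun p => (gi (fst p), di (snd p))).
      split; intros [x i]; unfold prod_act; simpl; rewrite ?Hg1, ?Hd1, ?Hg2, ?Hd2; auto.
    + intros [u i] [v j]; unfold bundle_adj, prod_act; simpl. split.
      * intros [[Huv Hj] | [Huv Hij]].
        -- left. split. apply (proj1 (HgA u v)); auto.
           rewrite (HFc g u v Huv), Hj, (HXc u v Huv). reflexivity.
        -- right. subst; split; auto; apply (proj1 (HdA i j)); auto.
      * intros [[Huv Hj] | [Huv Hij]].
        -- left. assert (Huv' : adjX u v) by (apply (proj2 (HgA u v)); auto). split; auto.
           rewrite (HFc g u v Huv'), (HXc u v Huv') in Hj.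
           apply (f_equal di) in Hj; rewrite !Hd1 in Hj; auto.
        -- right. split.
           ++ apply (f_equal gi) in Huv; rewrite !Hg1 in Huv; auto.
           ++ apply (proj2 (HdA i j)); auto.
  - intros [HsG [rX [[HrX1 HrX2] [MX HMX]]]] [HsD [rF [[HrF1 HrF2] [MF HMF]]]].
    set (cX := fun x => proj1_sig (constructive_indefinite_description _ (HsG x))).
    assert (HcX : forall x, stab_card actG x (cX x))
      by (intro x; exact (proj2_sig (constructive_indefinite_description _ (HsG x)))).
    set (cF := fun x => proj1_sig (constructive_indefinite_description _ (HsD x))).
    assert (HcF : forall x, stab_card actD x (cF x))
      by (intro x; exact (proj2_sig (constructive_indefinite_description _ (HsD x)))).
    split.
    { intros [x i]. exists (cX x * cF i)%nat. apply stab_prod; auto. }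
    exists (fun p => rX (fst p) /\ rF (snd p)). split.
    { split.
      - intros [x i]. destruct (HrX1 x) as [r [g [Hr Hg]]]; destruct (HrF1 i) as [s [d [Hs Hd]]].
        exists (r, s), (g, d). unfold prod_act; simpl. rewrite Hg, Hd; auto.
      - intros [r1 s1] [r2 s2] [g d] [H1 H2] [H3 H4] H. unfold prod_act in H; simpl in *.
        injection H; intros. f_equal; eauto. }
    exists (MX * MF)%R. intros l Hnd Hl.
    set (k := fun p : VX * VF => (cX (fst p) * cF (snd p))%nat).
    assert (Hk : forall p, In p l -> snd p = k (fst p)).
    { intros [[x i] n] Hp. destruct (Hl _ Hp) as [_ Hs]. simpl in *.
      eapply stab_card_unique; [exact Hs|]. apply stab_prod; auto. }
    assert (Heq : inv_card_sum l = sumf (fun a => / INR (k a))%R (map fst l)).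
    { rewrite inv_card_sumf. clear Hnd Hl. induction l as [|p l IH]; simpl; auto.
      unfold sumf in *; simpl. rewrite IH; [| intros; apply Hk; right; auto].
      rewrite (Hk p); auto. left; auto. }
    rewrite Heq.
    assert (decX : forall x y : VX, {x = y} + {x <> y})
      by (intros; apply excluded_middle_informative).
    assert (decF : forall x y : VF, {x = y} + {x <> y})
      by (intros; apply excluded_middle_informative).
    set (LX := nodup decX (map (fun p => fst (fst p)) l)).
    set (LF := nodup decF (map (fun p => snd (fst p)) l)).
    assert (H1 : (sumf (fun a => / INR (k a))%R (map fst l)
                  <= sumf (fun a => / INR (k a))%R (list_prod LX LF))%R).
    { apply sumf_incl; auto. intros; apply inv_INR_nonneg.
      intros [x i] Ha. apply in_map_iff in Ha. destruct Ha as [p [Hp Hin]].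
      apply in_prod_iff. unfold LX, LF. rewrite !nodup_In. split; apply in_map_iff;
        exists p; rewrite Hp; auto. }
    rewrite (sumf_ext _ (fun p => / INR (cX (fst p)) * / INR (cF (snd p)))%R (list_prod LX LF)) in H1
      by (intros; unfold k; rewrite mult_INR, Rinv_mult; auto).
    rewrite (sumf_prod (fun x => / INR (cX x))%R (fun x => / INR (cF x))%R) in H1.
    assert (HX : (sumf (fun x => / INR (cX x))%R LX <= MX)%R).
    { specialize (HMX (map (fun x => (x, cX x)) LX)).
      rewrite inv_card_sumf, sumf_map in HMX. simpl in HMX. apply HMX.
      - rewrite map_map. simpl. rewrite map_id. apply NoDup_nodup.
      - intros p Hp. apply in_map_iff in Hp. destruct Hp as [x [<- Hx]]. simpl.
        split; auto. unfold LX in Hx. rewrite nodup_In in Hx.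
        apply in_map_iff in Hx. destruct Hx as [q [<- Hq]]. apply (Hl q Hq). }
    assert (HF : (sumf (fun x => / INR (cF x))%R LF <= MF)%R).
    { specialize (HMF (map (fun x => (x, cF x)) LF)).
      rewrite inv_card_sumf, sumf_map in HMF. simpl in HMF. apply HMF.
      - rewrite map_map. simpl. rewrite map_id. apply NoDup_nodup.
      - intros p Hp. apply in_map_iff in Hp. destruct Hp as [x [<- Hx]]. simpl.
        split; auto. unfold LF in Hx. rewrite nodup_In in Hx.
        apply in_map_iff in Hx. destruct Hx as [q [<- Hq]]. apply (Hl q Hq). }
    assert (0 <= sumf (fun x => / INR (cX x))%R LX)%R by (apply sumf_nonneg; intros; apply inv_INR_nonneg).
    assert (0 <= sumf (fun x => / INR (cF x))%R LF)%R by (apply sumf_nonneg; intros; apply inv_INR_nonneg).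
    eapply Rle_trans; [exact H1|]. apply Rmult_le_compat; auto.
Qed.
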